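(* Let $u$ be a fast decreasing distribution on $\mathbb R^D$ (acting on $\mathbb C[\boldsymbol x]$), $\mathcal Q_2\in\mathbb C[\boldsymbol x]$ of degree $m_2$ with $Z(\mathcal Q_2)\cap\operatorname{supp}u=\varnothing$, and $\check u$ a linear functional with $\mathcal Q_2\check u=u$; assume $u,\check u$ quasi-definite and let $R=\langle\check u,P(\boldsymbol x)\chi(\boldsymbol x)^\top\rangle$. Then for every $k>m_2$ there exists a poised set of multi-indices, i.e. an ordered set $\mathcal M_k=\{\boldsymbol\beta_1,\dots,\boldsymbol\beta_r\}$ of distinct multi-indices with $|\boldsymbol\beta_i|<k$, $r=N_{k-1}-N_{k-m_2-1}$, such that the $r\times r$ matrix with block rows $\big(R_{[l],\boldsymbol\beta_1},\dots,R_{[l],\boldsymbol\beta_r}\big)$, $l=k-m_2,\dots,k-1$, is nonsingular.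
   Context: $[k]=\{\boldsymbol\alpha\in\mathbb Z_+^D:|\boldsymbol\alpha|=k\}$, $|[k]|=\binom{D+k-1}{k}$, $N_k=\binom{D+k}{D}$ (with $N_{-1}=0$). Multi-indices are ordered by graded lexicographic order; $\chi(\boldsymbol x)$ is the semi-infinite vector of monomials in this order; semi-infinite matrices have blocks $A_{[k],[l]}\in\mathbb C^{|[k]|\times|[l]|}$, and for a multi-index $\boldsymbol\beta$, $A_{[l],\boldsymbol\beta}\in\mathbb C^{|[l]|}$ is the column of block row $[l]$ indexed by $\boldsymbol\beta$. For a linear functional $u$ on $\mathbb C[\boldsymbol x]$, $\langle Qu,P\rangle:=\langle u,QP\rangle$; moment matrix $G=\langle u,\chi\chi^\top\rangle$; quasi-definite: all block truncations $G^{[k]}$ nonsingular; then $G=S^{-1}HS^{-\top}$ with $S$ block lower unitriangular, $H$ block diagonal, and $P(\boldsymbol x)=S\chi(\boldsymbol x)$ are the monic multivariate orthogonal polynomials. *)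

(* Defs.v *)
From HB Require Import structures.
From mathcomp Require Import all_boot all_order all_algebra.
From mathcomp Require Import mpoly.
From mathcomp Require Import all_classical all_reals all_analysis.
From mathcomp Require Import complex.

Set Implicit Arguments.
Unset Strict Implicit.
Unset Printing Implicit Defensive.

Import Order.TTheory GRing.Theory Num.Theory.
Local Open Scope ring_scope.

Notation cpoly R D := (mpoly.mpoly D R[i]).
Notation mi D := (mpoly.multinom D).
Notation pt R D := 'rV[R]_D.

Section Defs.
Variables (R : realType) (D : nat).
Local Notation cpoly := (cpoly R D).
Local Notation mi := (mi D).
Local Notation pt := (pt R D).

Definition mdeg (a : mi) : nat := mpoly.mdeg a.
Definition xm (a : mi) : cpoly := mpoly.mpolyX R[i] a.

Definition mk_mi (s : seq nat) : mi := mpoly.Multinom [tuple nth 0%N s i | i < D].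

Fixpoint comps (d l : nat) : seq (seq nat) :=
  match d with
  | 0 => if l == 0%N then [:: [::]] else [::]
  | d'.+1 => flatten [seq [seq i :: s | s <- comps d' (l - i)] | i <- rev (iota 0 l.+1)]
  end.

(* [l] : multi-indices of length l, in graded lexicographic order *)
Definition mis_deg (l : nat) : seq mi := [seq mk_mi s | s <- comps D l].
Definition mis_le (n : nat) : seq mi := flatten [seq mis_deg l | l <- iota 0 n.+1].
Definition mis_range (lo cnt : nat) : seq mi :=
  flatten [seq mis_deg l | l <- iota lo cnt].

Definition mi0 : mi := mk_mi [::].

Definition Nk (k : nat) : nat := 'C(D + k, D).

Definition lin_functional (L : cpoly -> R[i]) : Prop :=
  forall (a : R[i]) (p q : cpoly), L (a *: p + q) = a * L p + L q.

(* moment matrix G = <L, chi chi^T> *)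
Definition moment (L : cpoly -> R[i]) (a b : mi) : R[i] := L (xm a * xm b).

Definition Gtrunc (L : cpoly -> R[i]) (n : nat) :
  'M[R[i]]_(size (mis_le n)) :=
  \matrix_(i, j) moment L (nth mi0 (mis_le n) i) (nth mi0 (mis_le n) j).

Definition quasi_definite (L : cpoly -> R[i]) : Prop :=
  forall n, \det (Gtrunc L n) != 0.

Definition block_lower_unitriangular (S : mi -> mi -> R[i]) : Prop :=
  forall a b, ((mdeg a < mdeg b)%N -> S a b = 0) /\
              (mdeg a = mdeg b -> S a b = (a == b)%:R).

(* H = S G S^T ; the sums are finite since S a c = 0 unless |c| <= |a| *)
Definition Hmat (L : cpoly -> R[i]) (S : mi -> mi -> R[i]) (a b : mi) : R[i] :=
  \sum_(c <- mis_le (mdeg a)) \sum_(e <- mis_le (mdeg b))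
     S a c * moment L c e * S b e.

(* G = S^{-1} H S^{-T} with S block lower unitriangular and H block diagonal *)
Definition is_LU_factor (L : cpoly -> R[i]) (S : mi -> mi -> R[i]) : Prop :=
  block_lower_unitriangular S /\
  forall a b, mdeg a <> mdeg b -> Hmat L S a b = 0.

(* monic multivariate orthogonal polynomials P = S chi *)
Definition mop (S : mi -> mi -> R[i]) (a : mi) : cpoly :=
  \sum_(c <- mis_le (mdeg a)) S a c *: xm c.

Definition Rmat (Lc : cpoly -> R[i]) (S : mi -> mi -> R[i]) (a b : mi) : R[i] :=
  Lc (mop S a * xm b).

Definition ej (i : 'I_D) : pt := delta_mx 0 i.
Definition sqn (x : pt) : R := \sum_(i < D) x ord0 i ^+ 2.

Definition dpart (s : seq 'I_D) (f : pt -> R) : pt -> R :=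
  foldr (fun i g => fun x => derive g x (ej i)) f s.

Definition smooth (f : pt -> R) : Prop :=
  forall s x, differentiable (dpart s f) x.

Definition OC (k : nat) (f : pt -> R) : Prop :=
  smooth f /\ forall s, exists M : R, forall x, `|dpart s f x| <= M * (1 + sqn x) ^+ k.

Definition OC_any (f : pt -> R) : Prop := exists k, OC k f.

(* A fast decreasing distribution u in O_C' : a (complex) linear functional on O_C
   (given by its values on real-valued test functions: u(f+ig) = u f + i u g)
   continuous for the LF topology, i.e. for every k its restriction to O_{C,k} is
   bounded by finitely many of the seminorms
   p_{k,m}(f) = sup_{|alpha|<=m} sup_x (1+|x|^2)^{-k} |d^alpha f(x)|. *)
Definition fast_decreasing (u : (pt -> R) -> R[i]) : Prop :=
  (forall (f g : pt -> R) (a : R), OC_any f -> OC_any g ->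
      u (fun x => a * f x + g x) = complex.Complex a 0 * u f + u g) /\
  (forall k, exists (m : nat) (Cst : R), forall (f : pt -> R) (B : R), OC k f ->
      (forall s x, (size s <= m)%N -> `|dpart s f x| <= B * (1 + sqn x) ^+ k) ->
      `|u f| <= complex.Complex (Cst * B) 0).

Definition in_supp (u : (pt -> R) -> R[i]) (x : pt) : Prop :=
  ~ (exists e : R, 0 < e /\ forall f : pt -> R, smooth f ->
        (forall y, e <= `|y - x| -> f y = 0) -> u f = 0).

Definition peval (x : pt) (p : cpoly) : R[i] := mpoly.meval (fun i => complex.Complex (x ord0 i) 0) p.

Definition dist_on_poly (u : (pt -> R) -> R[i]) (p : cpoly) : R[i] :=
  u (fun x => complex.Re (peval x p)) + complex.Complex 0 1 * u (fun x => complex.Im (peval x p)).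

End Defs.

(* Main.v *)
Require Import Defs.
From HB Require Import structures.
From mathcomp Require Import all_boot all_order all_algebra.
From mathcomp Require Import mpoly.
From mathcomp Require Import all_classical all_reals all_analysis.
From mathcomp Require Import complex.
Import Order.TTheory GRing.Theory Num.Theory.
Local Open Scope ring_scope.

Lemma comps_prop {d l s} : s \in comps d l -> size s = d /\ sumn s = l.
Proof.
elim: d l s => [|d IH] l s /=.
  by case: eqP => [->|]; rewrite ?inE // => /eqP ->.
move=> /flattenP [t /mapP [i hi ->] /mapP [s' hs' ->]].
have [h1 h2] := IH _ _ hs'; rewrite /= h1 h2; split => //.
move: hi; rewrite mem_rev -[0%N :: _]/(iota 0 l.+1) mem_iota add0n ltnS => hil; by rewrite subnKC.
Qed.

Lemma uniq_flat_cons (I : seq nat) (f : nat -> seq (seq nat)) :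
  uniq I -> (forall i, uniq (f i)) ->
  uniq (flatten [seq [seq i :: s | s <- f i] | i <- I]).
Proof.
move=> uI uf; elim: I uI => [|i I IH] //= /andP [iI uI].
rewrite cat_uniq IH // andbT map_inj_uniq; last by move=> a b [].
rewrite uf /=.
apply/hasPn => t /flattenP [t' /mapP [j hj ->] /mapP [s hs ->]].
apply/mapP => -[s' _ [eji _]]; by move: iI; rewrite -eji hj.
Qed.

Lemma comps_uniq d l : uniq (comps d l).
Proof.
elim: d l => [|d IH] l /=; first by case: (l == 0%N).
by apply: uniq_flat_cons => //; rewrite rev_uniq; exact: (iota_uniq 0 l.+1).
Qed.

Lemma comps_S d l : comps d.+1 l =
  flatten [seq [seq i :: s | s <- comps d (l - i)] | i <- rev (iota 0 l.+1)].
Proof. by []. Qed.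

Lemma size_comps_S d l :
  size (comps d.+1 l) = (\sum_(j < l.+1) size (comps d j))%N.
Proof.
rewrite comps_S size_flatten /shape -map_comp sumnE big_map big_rev.
have -> : iota 0 l.+1 = index_iota 0 l.+1 by rewrite /index_iota subn0.
rewrite big_mkord (reindex_inj rev_ord_inj) /=.
apply: eq_bigr => i _; rewrite size_map subSS subKn // -ltnS; exact: ltn_ord.
Qed.

Lemma size_comps_sum d n : (\sum_(l < n.+1) size (comps d l))%N = 'C(d + n, d).
Proof.
elim: d n => [|d IH] n.
  by rewrite big_ord_recl /= bin0 big1 // => i _.
elim: n => [|n IHn]; first by rewrite big_ord1 size_comps_S IH /= !addn0 !binn.
rewrite big_ord_recr /= IHn size_comps_S IH.
by rewrite [in RHS]addSn binS addSnnS addnC.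
Qed.
Lemma mk_mi_deg D s : size s = D -> mdeg (mk_mi D s) = sumn s.
Proof.
move=> hs; subst D; rewrite mdegE sumnE (big_nth 0%N) big_mkord.
by apply: eq_bigr => i _; rewrite /mk_mi mnmE.
Qed.

Lemma mk_mi_inj D s t : size s = D -> size t = D -> mk_mi D s = mk_mi D t -> s = t.
Proof.
move=> hs ht /mnmP h; apply: (eq_from_nth (x0 := 0%N)); first by rewrite hs ht.
move=> i; rewrite hs => hi; have := h (Ordinal hi); by rewrite /mk_mi !mnmE.
Qed.

Lemma mis_deg_prop {D l a} : a \in mis_deg D l -> mdeg a = l.
Proof.
by move=> /mapP [s /comps_prop [h1 h2] ->]; rewrite mk_mi_deg.
Qed.

Lemma mis_deg_uniq D l : uniq (mis_deg D l).
Proof.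
rewrite map_inj_in_uniq ?comps_uniq // => s t /comps_prop [h1 _] /comps_prop [h2 _].
exact: mk_mi_inj.
Qed.

Lemma mis_range_deg {D lo cnt a} : a \in mis_range D lo cnt ->
  (lo <= mdeg a)%N && (mdeg a < lo + cnt)%N.
Proof.
move=> /flattenP [t /mapP [l hl ->] /mis_deg_prop ->].
by rewrite -mem_iota.
Qed.

Definition rdeg D (a b : mi D) := (mdeg a <= mdeg b)%N && (a != b).

Lemma mis_range_pw D lo cnt : pairwise (@rdeg D) (mis_range D lo cnt).
Proof.
elim: cnt lo => [|cnt IH] lo //=.
rewrite /mis_range /= pairwise_cat -/(mis_range D lo.+1 cnt) IH andbT.
apply/andP; split.
  apply/allrelP => a b ha hb.
  have da := mis_deg_prop ha.
  have /andP [db _] := mis_range_deg hb.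
  rewrite /rdeg; apply/andP; split; first by rewrite da ltnW.
  apply: contraTneq db => eab; by rewrite -eab da ltnn.
have := mis_deg_uniq D lo; have := @mis_deg_prop D lo.
elim: (mis_deg D lo) => [|a s IHs] //= hd /andP [ha us].
rewrite IHs ?andbT //; last by move=> b hb; apply: hd; rewrite inE hb orbT.
apply/allP => b hb; rewrite /rdeg (hd a) ?inE ?eqxx // (hd b) ?inE ?hb ?orbT //.
by rewrite leqnn /=; apply: contraNneq ha => ->.
Qed.

Lemma mis_range_cat D lo c1 c2 :
  mis_range D lo (c1 + c2) = mis_range D lo c1 ++ mis_range D (lo + c1) c2.
Proof. by rewrite /mis_range iotaD map_cat flatten_cat. Qed.

Lemma size_mis_le D n : size (mis_le D n) = Nk D n.
Proof.
rewrite /mis_le size_flatten /shape -map_comp sumnE big_map.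
rewrite /Nk -(size_comps_sum D n) -[iota 0 n.+1]/(index_iota 0 n.+1) big_mkord.
by apply: eq_bigr => i _; rewrite /= size_map.
Qed.

Lemma lin_sum {R : realType} {D : nat} {L : cpoly R D -> R[i]} :
  lin_functional L ->
  forall (I : Type) (r : seq I) (F : I -> cpoly R D) (c : I -> R[i]),
  L (\sum_(x <- r) c x *: F x) = \sum_(x <- r) c x * L (F x).
Proof.
move=> hL I r F c.
have L0 : L 0 = 0.
  have := hL 1 0 0; rewrite scaler0 addr0 mul1r.
  by move/(congr1 (fun z => z - L 0)); rewrite subrr addrK.
elim: r => [|x r IH]; first by rewrite !big_nil.
by rewrite !big_cons hL IH.
Qed.

Lemma pw_uniq D (s : seq (mi D)) : pairwise (@rdeg D) s -> uniq s.
Proof. by apply: pairwise_uniq => a; rewrite /rdeg eqxx andbF. Qed.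

Lemma mis_le_range D n : mis_le D n = mis_range D 0 n.+1.
Proof. by []. Qed.

Theorem mainTheorem4 (R : realType) (D : nat)
  (u : (pt R D -> R) -> R[i]) (Q2 : cpoly R D) (m2 : nat)
  (uc : cpoly R D -> R[i]) (Su : mi D -> mi D -> R[i]) :
  fast_decreasing u ->
  mpoly.msize Q2 = m2.+1 ->
  (forall x : pt R D, in_supp u x -> peval x Q2 <> 0) ->
  lin_functional uc ->
  (forall p : cpoly R D, uc (Q2 * p) = dist_on_poly u p) ->
  quasi_definite (dist_on_poly u) ->
  quasi_definite uc ->
  is_LU_factor (dist_on_poly u) Su ->
  forall k : nat, (m2 < k)%N ->
  exists beta : 'I_(Nk D k.-1 - Nk D (k - m2).-1) -> mi D,
    injective beta /\
    (forall j, (mdeg (beta j) < k)%N) /\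
    (\matrix_(i, j) Rmat uc Su (nth (mi0 D) (mis_range D (k - m2) m2) i) (beta j))
      \in unitmx.
Proof.
move=> _ _ _ hlin _ _ hqd [hS _] k hk.
have k0 : (0 < k)%N by apply: leq_ltn_trans hk.
have km0 : (0 < k - m2)%N by rewrite subn_gt0.
set A := mis_range D (k - m2) m2.
set P0 := mis_range D 0 (k - m2).
set L := mis_le D k.-1.
have hL : L = P0 ++ A.
  by rewrite /L mis_le_range prednK // -{1}(subnK (ltnW hk)) (mis_range_cat D 0).
have hP0 : P0 = mis_le D (k - m2).-1 by rewrite mis_le_range prednK.
have sA : size A = (Nk D k.-1 - Nk D (k - m2).-1)%N.
  by rewrite -!size_mis_le -/L -hP0 hL size_cat addKn.
set n := (Nk D k.-1 - Nk D (k - m2).-1)%N.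
set N := size L.
have hN : N = (size P0 + n)%N by rewrite /N hL size_cat sA.
have Ldeg : forall c, (c < N)%N -> (mdeg (nth (mi0 D) L c) < k)%N.
  move=> c hc; have := mis_range_deg (mem_nth (mi0 D) hc).
  by rewrite add0n prednK // => /andP [].
have Adeg : forall a, a \in A -> (mdeg a <= k.-1)%N.
  move=> a /mis_range_deg /andP [_]; rewrite subnK ?(ltnW hk) // => h; by rewrite -ltnS prednK.
have Rexp : forall a b, (mdeg a <= k.-1)%N ->
    Rmat uc Su a b = \sum_(c < N) Su a (nth (mi0 D) L c) * moment uc (nth (mi0 D) L c) b.
  move=> a b ha.
  rewrite /Rmat /mop mulr_suml.
  under eq_bigr do rewrite -scalerAl.
  rewrite (lin_sum hlin) -(big_mkord xpredT (fun c => Su a (nth (mi0 D) L c) * moment uc (nth (mi0 D) L c) b)).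
  rewrite -(big_nth (mi0 D) xpredT (fun c => Su a c * moment uc c b)).
  have -> : L = mis_le D (mdeg a) ++ mis_range D (mdeg a).+1 (k.-1 - mdeg a).
    by rewrite /L !mis_le_range -(mis_range_cat D 0) addSn subnKC.
  rewrite [RHS]big_cat [X in _ = _ + X]big1_seq ?addr0 // => c hc.
  have /andP [hc1 _] := mis_range_deg hc.
  by rewrite (proj1 (hS a c)) ?mul0r.
pose G := Gtrunc uc k.-1.
have Gu : G \in unitmx by rewrite unitmxE unitfE; exact: hqd.
pose T : 'M[R[i]]_(n, N) := \matrix_(i, c) Su (nth (mi0 D) A i) (nth (mi0 D) L c).
have AinA : forall i : 'I_n, nth (mi0 D) A i \in A by move=> i; rewrite mem_nth // sA.
have RT : forall (i : 'I_n) (j : 'I_N), (T *m G) i j = Rmat uc Su (nth (mi0 D) A i) (nth (mi0 D) L j).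
  move=> i j; rewrite mxE Rexp ?Adeg //; apply: eq_bigr => c _; by rewrite !mxE.
pose E : 'M[R[i]]_(N, n) := \matrix_(c, j) ((c : nat) == (size P0 + j)%N)%:R.
have hj : forall j : 'I_n, (size P0 + j < N)%N by move=> j; rewrite hN ltn_add2l.
have TE : forall i j : 'I_n, (T *m E) i j = Su (nth (mi0 D) A i) (nth (mi0 D) A j).
  move=> i j; rewrite mxE (bigD1 (Ordinal (hj j))) //= big1 ?addr0.
    by rewrite !mxE eqxx mulr1 hL nth_cat ltnNge leq_addr /= addKn.
  move=> c hc; rewrite !mxE; case: eqP => h; last by rewrite mulr0.
  by move: hc; rewrite (_ : c = Ordinal (hj j)) ?eqxx //; apply: val_inj.
have pwA := mis_range_pw D (k - m2) m2.
have TEu : T *m E \in unitmx.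
  rewrite unitmxE det_trig.
    rewrite big1 ?unitr1 // => i _; rewrite TE; by rewrite (proj2 (hS _ _)) // eqxx.
  apply/is_trig_mxP => i j hij; rewrite TE.
  have /(pairwiseP (mi0 D)) hpw := pwA; have := hpw i j.
  rewrite !inE -!/A sA => /(_ (ltn_ord i) (ltn_ord j) hij) /andP [hle hne].
  case: (ltngtP (mdeg (nth (mi0 D) A i)) (mdeg (nth (mi0 D) A j))) hle => // hd _.
    by rewrite (proj1 (hS _ _)).
  by rewrite (proj2 (hS _ _)) // (negPf hne).
have rT : \rank T = n.
  apply/eqP; rewrite eqn_leq rank_leq_row /=.
  have := mxrankM_maxl T E; by rewrite mxrank_unit.
have rTG : \rank (T *m G) = n by rewrite mxrankMfree ?row_free_unit.
have hfull : row_full (T *m G)^T by rewrite /row_full mxrank_tr rTG.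
pose f := fullrankfun hfull.
have uL : uniq L by apply: pw_uniq; exact: (mis_range_pw D 0 k.-1.+1).
exists (fun j => nth (mi0 D) L (f j)); split; [|split].
- move=> j1 j2 /eqP; rewrite nth_uniq // => /eqP /val_inj; exact: fullrankfun_inj.
- move=> j; exact: Ldeg.
have -> : (\matrix_(i, j) Rmat uc Su (nth (mi0 D) A i) (nth (mi0 D) L (f j)))
   = (rowsub f (T *m G)^T)^T.
  by apply/matrixP => i j; rewrite [LHS]mxE -RT !mxE.
by rewrite unitmx_tr fullrowsub_unit.
Qed.
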